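(* Let $k\ge2$ and $\ell\ge0$. Among all stable configurations reachable by labeled chip-firing from $k^\ell$ chips labeled $1,\dots,k^\ell$ at the root of the infinite rooted directed $k$-ary tree (viewed as permutations of $\{1,\dots,k^\ell\}$), the permutation $Z_k(\ell)$ has the maximum number of inversions, and this maximum number of inversions is $$\frac{k^{2\ell}-\ell k^{\ell+1}+(\ell-1)k^{\ell}}{4}.$$
   Context: Labeled chip-firing on the infinite rooted directed $k$-ary tree (each vertex has $k$ children ordered left to right, root on layer $1$): a vertex with at least $k$ chips may fire by choosing any $k$ of its chips and sending the $i$-th smallest label among them to its $i$-th leftmost child; a configuration is stable when no vertex has $\ge k$ chips. Starting with $k^\ell$ chips at the root, every stable configuration has exactly one chip on each vertex of layer $\ell+1$ and none elsewhere, and is identified with the permutation of labels read left to right on layer $\ell+1$. $Z_k(\ell)$ is the stable configuration obtained by the strategy in which every vertex on layers $1,\dots,\ell$, holding chips $c_1<\cdots<c_{kq}$, fires the $k$-tuples of consecutive chips $(c_1,\dots,c_k),(c_{k+1},\dots,c_{2k}),\dots$ in sorted order; equivalently, its $p$-th entry is $1+\mathrm{rev}_{k,\ell}(p-1)$, where $\mathrm{rev}_{k,\ell}$ reverses the $\ell$-digit (zero-padded) base-$k$ representation. An inversion of a permutation $\pi$ is a pair $i<j$ with $\pi_i>\pi_j$. *)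

(* Defs.v *)
From Stdlib Require Import Relations.
From mathcomp Require Import all_boot all_order all_algebra.
Set Implicit Arguments. Unset Strict Implicit. Unset Printing Implicit Defensive.

(* Vertices of the infinite rooted k-ary tree: a vertex is the sequence of
   child indices (each in 0..k-1) on the path from the root; the root is [::],
   and the i-th leftmost child (i = 1..k) of v is rcons v (i-1).
   A vertex v lies on layer (size v).+1. *)
Definition vertex := seq nat.

(* Chips are labelled 1..k^l; chip with label a+1 is represented by a : 'I_(k^l).
   A configuration records, for each chip, the vertex it sits on. *)
Definition config (k l : nat) := 'I_(k ^ l) -> vertex.

Definition init_config (k l : nat) : config k l := fun _ => [::].

(* One firing: at vertex v, choose k chips s (listed in increasing label
   order, hence distinct) all sitting at v; the chip of i-th smallest label
   (i = 1..k, index i-1 in s) goes to the i-th leftmost child of v. *)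
Definition fire_step (k l : nat) (c c' : config k l) : Prop :=
  exists (v : vertex) (s : seq 'I_(k ^ l)),
    [/\ size s = k, sorted ltn (map val s), all (fun i => c i == v) s &
        forall j, c' j = if j \in s then rcons v (index j s) else c j].

Definition reachable (k l : nat) (c : config k l) : Prop :=
  clos_refl_trans (config k l) (@fire_step k l) (@init_config k l) c.

Definition stable (k l : nat) (c : config k l) : Prop :=
  forall v : vertex, #|[pred i : 'I_(k ^ l) | c i == v]| < k.

(* The vertex in position p (0-indexed, left to right) of layer l+1:
   the l-digit base-k expansion of p, most significant digit first. *)
Definition layer_vertex (k l p : nat) : vertex :=
  [seq (p %/ k ^ (l.-1 - j)) %% k | j <- iota 0 l].

(* The label of the chip on vertex v (0 if there is none). *)
Definition label_at (k l : nat) (c : config k l) (v : vertex) : nat :=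
  if [pick i : 'I_(k ^ l) | c i == v] is Some i then (val i).+1 else 0.

Definition perm_of (k l : nat) (c : config k l) : seq nat :=
  mkseq (fun p => label_at c (layer_vertex k l p)) (k ^ l).

Definition inversions (s : seq nat) : nat :=
  #|[set ij : 'I_(size s) * 'I_(size s) |
      (ij.1 < ij.2) && (nth 0 s ij.2 < nth 0 s ij.1)]|.

Definition rev_digits (k l n : nat) : nat :=
  \sum_(j < l) ((n %/ k ^ j) %% k) * k ^ (l.-1 - j).

Definition Z (k l : nat) : seq nat :=
  mkseq (fun q => (rev_digits k l q).+1) (k ^ l).

(* Main.v *)
From Stdlib Require Import Relations FunctionalExtensionality.
Require Import Defs.
From mathcomp Require Import all_boot all_order all_algebra.
From mathcomp Require Import zify ring.
Import GRing.Theory Num.Theory.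

Lemma digit_hi k n i r j : 0 < k -> j < n ->
  ((i * k ^ n + r) %/ k ^ j) %% k = (r %/ k ^ j) %% k.
Proof.
move=> k0 jn.
have -> : k ^ n = (k ^ (n - j).-1 * k) * k ^ j.
  by rewrite -expnSr prednK ?subn_gt0 // -expnD subnK // ltnW.
rewrite mulnA divnMDl ?expn_gt0 ?k0 // mulnA modnMDl //.
Qed.

Lemma lv_cons k n i r : 0 < k -> i < k -> r < k ^ n ->
  layer_vertex k n.+1 (i * k ^ n + r) = i :: layer_vertex k n r.
Proof.
move=> k0 ik rn; rewrite /layer_vertex /= subn0.
rewrite divnMDl ?expn_gt0 ?k0 // divn_small // addn0 modn_small //; congr (_ :: _).
rewrite -[1]addn0 iotaDl -map_comp; apply/eq_in_map => j; rewrite mem_iota => /andP[_ jn].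
rewrite /= (_ : n - (1 + j) = n.-1 - j); last by lia.
by apply: digit_hi => //; lia.
Qed.

Lemma revd_cons k n i r : 0 < k -> i < k -> r < k ^ n ->
  rev_digits k n.+1 (i * k ^ n + r) = k * rev_digits k n r + i.
Proof.
move=> k0 ik rn; rewrite /rev_digits big_ord_recr /= subnn expn0 muln1.
rewrite divnMDl ?expn_gt0 ?k0 // divn_small // addn0 modn_small //; congr (_ + _).
rewrite big_distrr /=; apply: eq_bigr => j _ /=.
rewrite digit_hi //; have -> : n - j = (n.-1 - j).+1 by have := ltn_ord j; lia.
by rewrite expnS mulnCA.
Qed.

Definition dig k n a : vertex := [seq (a %/ k ^ j) %% k | j <- iota 0 n].

Lemma dig_cons k n a : dig k n.+1 a = a %% k :: dig k n (a %/ k).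
Proof.
rewrite /dig /= expn0 divn1; congr (_ :: _).
rewrite (iotaDl 1 0) -map_comp; apply: eq_map => j /=.
by rewrite add1n expnS divnMA.
Qed.

Lemma dig_rcons k n a : dig k n.+1 a = rcons (dig k n a) ((a %/ k ^ n) %% k).
Proof. by rewrite /dig -addn1 iotaD map_cat /= cats1. Qed.

Lemma dig_inj k n a b : 0 < k -> a < k ^ n -> b < k ^ n -> dig k n a = dig k n b -> a = b.
Proof.
move=> k0; elim: n a b => [|n IH] a b.
  by rewrite expn0 !ltnS !leqn0 => /eqP-> /eqP->.
rewrite !dig_cons => ha hb [e1 e2].
rewrite (divn_eq a k) (divn_eq b k) e1 (IH (a %/ k) (b %/ k)) //.
  by rewrite ltn_divLR // -expnSr.
by rewrite ltn_divLR // -expnSr.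
Qed.

Lemma rev_lv k n p : 0 < k -> p < k ^ n ->
  rev_digits k n p < k ^ n /\ dig k n (rev_digits k n p) = layer_vertex k n p.
Proof.
move=> k0; elim: n p => [|n IH] p.
  by rewrite expn0 ltnS leqn0 => /eqP->; rewrite /rev_digits big_ord0.
move=> hp.
have hi : p %/ k ^ n < k by rewrite ltn_divLR ?expn_gt0 ?k0 // -expnS.
have hr : p %% k ^ n < k ^ n by rewrite ltn_mod expn_gt0 k0.
rewrite (divn_eq p (k ^ n)) revd_cons // lv_cons //.
have [IH1 IH2] := IH _ hr.
split.
  rewrite expnS; apply: (@leq_trans (k * (rev_digits k n (p %% k ^ n)).+1)).
    by rewrite mulnS addnC ltn_add2r.
  by rewrite leq_mul2l IH1 orbT.
rewrite dig_cons mulnC modnMDl modn_small // divnMDl // (divn_small hi) addn0 IH2 //.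
Qed.

Fixpoint invs (s : seq nat) : nat :=
  if s is x :: s' then count (fun y => y < x) s' + invs s' else 0.

Definition cross (s t : seq nat) : nat := \sum_(x <- s) count (fun y => y < x) t.

Lemma count_sum T (a : pred T) s : count a s = \sum_(y <- s) (a y : nat).
Proof. by elim: s => [|x s IH]; rewrite ?big_nil ?big_cons //= IH. Qed.

Lemma count_ord (s : seq nat) (a : pred nat) :
  count a s = \sum_(j < size s) (a (nth 0 s j) : nat).
Proof.
elim: s => [|x s IH]; first by rewrite big_ord0.
by rewrite /= big_ord_recl /= IH.
Qed.

Lemma inversions_invs s : inversions s = invs s.
Proof.
rewrite /inversions cardsE -sum1_card big_mkcond /=.
rewrite (eq_bigr (fun ij : 'I_(size s) * 'I_(size s) =>
   ((ij.1 < ij.2) && (nth 0 s ij.2 < nth 0 s ij.1) : nat))); last first.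
  by move=> ij _; rewrite unfold_in /=; case: ifP.
have := pair_bigA _ (fun i j : 'I_(size s) =>
          ((i < j) && (nth 0 s j < nth 0 s i) : nat)); rewrite /= => <-.
elim: s => [|x s IH]; first by rewrite big_ord0.
rewrite /= big_ord_recl /= big_ord_recl /= add0n.
rewrite -IH count_ord; congr (_ + _).
apply: eq_bigr => i _; rewrite big_ord_recl /= add0n.
by apply: eq_bigr => j _.
Qed.

Lemma cross_catr s t1 t2 : cross s (t1 ++ t2) = cross s t1 + cross s t2.
Proof. by rewrite /cross -big_split /=; apply: eq_bigr => x _; rewrite count_cat. Qed.

Lemma invs_cat s t : invs (s ++ t) = invs s + invs t + cross s t.
Proof.
elim: s => [|x s IH]; first by rewrite /cross big_nil addn0.
by rewrite /= IH count_cat /cross big_cons; lia.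
Qed.

Lemma cross_flatten_le s ts X : (forall t, t \in ts -> cross s t <= X) ->
  cross s (flatten ts) <= size ts * X.
Proof.
elim: ts => [|t ts IH] h; first by rewrite /cross big1 // => x _.
rewrite /= cross_catr mulSn leq_add ?h ?mem_head // IH // => u hu.
by rewrite h // inE hu orbT.
Qed.

Lemma cross_flatten_eq s ts X : (forall t, t \in ts -> cross s t = X) ->
  cross s (flatten ts) = size ts * X.
Proof.
elim: ts => [|t ts IH] h; first by rewrite /cross big1 // => x _.
rewrite /= cross_catr mulSn h ?mem_head // IH // => u hu.
by rewrite h // inE hu orbT.
Qed.

Lemma binS2 n : 'C(n.+1, 2) = 'C(n, 2) + n.
Proof. by rewrite binS bin1. Qed.

Lemma blocks_le (B : nat -> seq nat) F X n m :
  (forall i, m <= i < m + n -> invs (B i) <= F) ->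
  (forall i j, m <= i -> i < j -> j < m + n -> cross (B i) (B j) <= X) ->
  invs (flatten [seq B i | i <- iota m n]) <= n * F + 'C(n, 2) * X.
Proof.
elim: n m => [|n IH] m h1 h2; first by [].
rewrite /= invs_cat binS2.
have e1 : invs (B m) <= F by apply: h1; lia.
have e2 := IH m.+1 (fun i hi => h1 i ltac:(lia))
   (fun i j a b c => h2 i j ltac:(lia) b ltac:(lia)).
have e3 : cross (B m) (flatten [seq B i | i <- iota m.+1 n]) <= n * X.
  have := cross_flatten_le (B m) [seq B i | i <- iota m.+1 n] X.
  rewrite size_map size_iota; apply => t /mapP[j]; rewrite mem_iota => hj ->.
  apply: h2; lia.
rewrite mulSn mulnDl; lia.
Qed.

Lemma blocks_eq (B : nat -> seq nat) F X n m :
  (forall i, m <= i < m + n -> invs (B i) = F) ->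
  (forall i j, m <= i -> i < j -> j < m + n -> cross (B i) (B j) = X) ->
  invs (flatten [seq B i | i <- iota m n]) = n * F + 'C(n, 2) * X.
Proof.
elim: n m => [|n IH] m h1 h2; first by [].
rewrite /= invs_cat binS2.
have e1 : invs (B m) = F by apply: h1; lia.
have e2 := IH m.+1 (fun i hi => h1 i ltac:(lia))
   (fun i j a b c => h2 i j ltac:(lia) b ltac:(lia)).
have e3 : cross (B m) (flatten [seq B i | i <- iota m.+1 n]) = n * X.
  have := cross_flatten_eq (B m) [seq B i | i <- iota m.+1 n] X.
  rewrite size_map size_iota; apply => t /mapP[j]; rewrite mem_iota => hj ->.
  apply: h2; lia.
rewrite e1 e2 e3 mulSn mulnDl; lia.
Qed.

Lemma bin2_id m : 'C(m, 2) * 2 + m = m * m.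
Proof. elim: m => [|m IH] //; rewrite binS2; nia. Qed.

Lemma sum_le_const (T : eqType) (s : seq T) (F : T -> nat) c :
  (forall y, y \in s -> F y <= c) -> \sum_(y <- s) F y <= size s * c.
Proof.
elim: s => [|x s IH] h; first by rewrite big_nil.
rewrite big_cons mulSn leq_add ?h ?mem_head // IH // => y hy.
by rewrite h // inE hy orbT.
Qed.

Lemma sum_eq_const (T : eqType) (s : seq T) (F : T -> nat) c :
  (forall y, y \in s -> F y = c) -> \sum_(y <- s) F y = size s * c.
Proof.
elim: s => [|x s IH] h; first by rewrite big_nil.
rewrite big_cons mulSn h ?mem_head // IH // => y hy.
by rewrite h // inE hy orbT.
Qed.

Lemma cross_swap s t :
  cross s t = \sum_(y <- t) count (fun x => y < x) s.
Proof.
rewrite /cross; under eq_bigr => x _ do rewrite count_sum.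
rewrite exchange_big /=; apply: eq_bigr => y _; by rewrite count_sum.
Qed.

Lemma count3 x s : count (fun y => y < x) s + count (fun y => x < y) s
   + count (fun y => y == x) s = size s.
Proof.
elim: s => [|y s IH] //=; case: (ltngtP y x) => h /=.
all: rewrite -IH; set a := count _ s; set b := count _ s; set c := count _ s; simpl nat_of_bool; lia.
Qed.

Lemma count2 x s : count (fun y => y <= x) s = count (fun y => y < x) s
   + count (fun y => y == x) s.
Proof.
elim: s => [|y s IH] //=; rewrite IH; case: (ltngtP y x) => h /=.
all: set a := count _ s; set b := count _ s; simpl nat_of_bool; lia.
Qed.

Lemma cross_self s : uniq s -> cross s s = 'C(size s, 2).
Proof.
move=> us.
have h : cross s s + cross s s = size s * (size s).-1.
  rewrite {2}cross_swap /cross -big_split /=; apply: sum_eq_const => x xs.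
  have := count3 x s; have := count_uniq_mem x us; rewrite xs /= => ->; lia.
have := bin2_id (size s); nia.
Qed.

Lemma cross_bound s t m : size s = m -> size t = m -> uniq t ->
  (forall x, count (fun y => y <= x) t <= count (fun y => y < x) s) ->
  cross s t <= 'C(m, 2).
Proof.
move=> ss st ut H.
have hT : \sum_(y <- t) count (fun z => z <= y) t = 'C(m, 2) + m.
  under eq_bigr => y _ do rewrite count2.
  rewrite big_split /= -/(cross t t) cross_self // st; congr (_ + _).
  rewrite -st -[size t]muln1; apply: sum_eq_const => y yt.
  by have := count_uniq_mem y ut; rewrite yt.
have h2 : cross s t + \sum_(y <- t) count (fun z => z <= y) t <= m * m.
  rewrite cross_swap -big_split /= -{1}st; apply: sum_le_const => y _.
  have := count3 y s; have := H y; lia.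
have := bin2_id m; lia.
Qed.

Lemma mkseq_add (T : Type) (g : nat -> T) a b : mkseq g (a + b) = mkseq g a ++ mkseq (fun r => g (a + r)) b.
Proof.
rewrite /mkseq iotaD map_cat; congr (_ ++ _).
by rewrite add0n -[a]addn0 iotaDl -map_comp addn0.
Qed.

Lemma mkseq_blocks (T : Type) (g : nat -> T) K n : mkseq g (n * K) =
  flatten [seq mkseq (fun r => g (i * K + r)) K | i <- iota 0 n].
Proof.
elim: n => [|n IH] //.
by rewrite mulSnr mkseq_add IH -addn1 iotaD map_cat flatten_cat /= cats0.
Qed.

Lemma invs_map f s : (forall x y, (f x < f y) = (x < y)) -> invs (map f s) = invs s.
Proof.
move=> h; elim: s => [|x s IH] //=; rewrite IH count_map; congr (_ + _).
by apply: eq_count => y /=.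
Qed.

Lemma cross_map f g s t : (forall x y, (g y < f x) = (y < x)) ->
  cross (map f s) (map g t) = cross s t.
Proof.
move=> h; rewrite /cross big_map; apply: eq_bigr => x _; rewrite count_map.
by apply: eq_count => y /=.
Qed.

Definition R k n := mkseq (rev_digits k n) (k ^ n).

Lemma R_succ k n : 0 < k ->
  R k n.+1 = flatten [seq map (fun x => k * x + i) (R k n) | i <- iota 0 k].
Proof.
move=> k0; rewrite /R expnS mkseq_blocks; congr flatten.
apply/eq_in_map => i; rewrite mem_iota add0n => /andP[_ ik].
rewrite /mkseq -map_comp; apply/eq_in_map => r; rewrite mem_iota => /andP[_ rk] /=.
by rewrite revd_cons.
Qed.



Lemma rev_inj k n p q : 0 < k -> p < k ^ n -> q < k ^ n ->
  rev_digits k n p = rev_digits k n q -> p = q.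
Proof.
move=> k0; elim: n p q => [|n IH] p q.
  by rewrite expn0 !ltnS !leqn0 => /eqP-> /eqP->.
move=> hp hq.
have hi : forall p, p < k ^ n.+1 -> p %/ k ^ n < k.
  by move=> x hx; rewrite ltn_divLR ?expn_gt0 ?k0 // -expnS.
have hr : forall p, p %% k ^ n < k ^ n by move=> x; rewrite ltn_mod expn_gt0 k0.
rewrite (divn_eq p (k ^ n)) (divn_eq q (k ^ n)) !revd_cons ?hi ?hr // => e.
have e1 : p %/ k ^ n = q %/ k ^ n.
  move: (congr1 (modn^~ k) e); rewrite ![k * _]mulnC !modnMDl.
  by rewrite !modn_small ?hi.
rewrite e1 in e; move/eqP: e; rewrite eqn_add2r eqn_mul2l (negbTE (lt0n_neq0 k0)) /=.
by move/eqP/IH => -> //; rewrite ?e1.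
Qed.

Lemma lv_inj k n p q : 0 < k -> p < k ^ n -> q < k ^ n ->
  layer_vertex k n p = layer_vertex k n q -> p = q.
Proof.
move=> k0 hp hq e.
have [h1 h2] := rev_lv _ _ _ k0 hp; have [h3 h4] := rev_lv _ _ _ k0 hq.
apply: (rev_inj _ _ _ _ k0 hp hq); apply: (dig_inj _ _ _ _ k0 h1 h3); by rewrite h2 h4.
Qed.

Lemma R_uniq k n : 0 < k -> uniq (R k n).
Proof.
move=> k0; rewrite /R /mkseq map_inj_in_uniq ?iota_uniq // => p q.
by rewrite !mem_iota /= => hp hq; apply: rev_inj.
Qed.

Fixpoint fZ k n := if n is n'.+1 then k * fZ k n' + 'C(k, 2) * 'C(k ^ n', 2) else 0.

Lemma invs_R k n : 0 < k -> invs (R k n) = fZ k n.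
Proof.
move=> k0; elim: n => [|n IH]; first by rewrite /R expn0.
rewrite R_succ // (blocks_eq (fun i => map (fun x => k * x + i) (R k n))
   (fZ k n) ('C(k ^ n, 2)) k 0) //=.
- move=> i _; rewrite invs_map // => x y; by rewrite ltn_add2r ltn_pmul2l.
- move=> i j _ ij jk; rewrite cross_map ?cross_self ?R_uniq ?size_mkseq //.
  move=> x y; case: (ltnP y x) => h.
    by apply/idP; nia.
  by apply/negbTE; rewrite -leqNgt; nia.
Qed.

Lemma fZ_rat k n : ((fZ k n)%:R * 4 : rat)%R =
  ((k%:R ^+ n) ^+ 2 - n%:R * (k%:R ^+ n * k%:R) + (n%:R - 1) * k%:R ^+ n)%R.
Proof.
have bin : forall m, ('C(m, 2)%:R * 2 : rat)%R = (m%:R * m%:R - m%:R)%R.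
  move=> m; have := congr1 (fun x => x%:R : rat) (bin2_id m).
  rewrite /= natrD !natrM => <-; ring.
elim: n => [|n IH]; first by rewrite /= expr0; ring.
rewrite /= natrD !natrM.
transitivity (k%:R * ((fZ k n)%:R * 4) + ('C(k, 2)%:R * 2) * ('C(k ^ n, 2)%:R * 2) : rat)%R.
  ring.
rewrite IH !bin natrX -[n.+1]addn1 natrD exprD expr1; ring.
Qed.

Definition gid k t a := a %% k ^ t + k ^ t * (a %/ (k ^ t * k)).

Definition Dc k l t u : config k l :=
  fun a => if gid k t a < u then dig k t.+1 a else dig k t a.

Lemma decomp K k a : 0 < K -> 0 < k ->
  a = a %% K + ((a %/ K) %% k) * K + (a %/ (K * k)) * (K * k).
Proof.
move=> K0 k0.
have e1 := divn_eq a K; have e2 := divn_eq (a %/ K) k.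
rewrite -divnMA in e2; rewrite {1}e1 {1}e2; lia.
Qed.

Lemma pmap_insub_val N (s : seq nat) : all (fun x => x < N) s ->
  map val (pmap (insub : nat -> option 'I_N) s) = s.
Proof.
elim: s => [|x s IH] //= /andP[hx hs].
by rewrite insubT /= IH.
Qed.

Lemma dig_mod k t a : dig k t a = dig k t (a %% k ^ t).
Proof.
rewrite /dig; apply/eq_in_map => j; rewrite mem_iota => /andP[_ jt] /=.
rewrite !modn_divl; congr (_ %/ _).
by rewrite -expnS modn_dvdm // dvdn_exp2l.
Qed.

Lemma Dstep k l t u : 0 < k -> t < l -> u < k ^ l.-1 ->
  fire_step (Dc k l t u) (Dc k l t u.+1).
Proof.
move=> k0 tl ul.
have K0 : 0 < k ^ t by rewrite expn_gt0 k0.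
have eKQ : k ^ l = k ^ t * k * k ^ (l.-1 - t).
  by rewrite -expnSr -expnD; congr (k ^ _); lia.
have eKQ' : k ^ l.-1 = k ^ t * k ^ (l.-1 - t) by rewrite -expnD; congr (k ^ _); lia.
move: ul eKQ eKQ' K0; rewrite /Dc /gid.
set K := k ^ t; set Q := k ^ (l.-1 - t) => ul eKQ eKQ' K0.
pose f d := u %% K + d * K + (u %/ K) * (K * k).
have uQ : u %/ K < Q by rewrite ltn_divLR // mulnC -eKQ'.
have rK := ltn_pmod u K0.
have fb : forall d, d < k -> f d < k ^ l.
  move=> d dk; rewrite eKQ /f.
  have h1 : (u %/ K).+1 * (K * k) <= Q * (K * k) by rewrite leq_mul2r uQ orbT.
  have h2 : d.+1 * K <= k * K by rewrite leq_mul2r dk orbT.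
  nia.
pose s := pmap (insub : nat -> option 'I_(k ^ l)) [seq f d | d <- iota 0 k].
have hs : map val s = [seq f d | d <- iota 0 k].
  apply: pmap_insub_val; apply/allP => x /mapP[d]; rewrite mem_iota => /andP[_ dk] ->.
  exact: fb.
have finj : injective f.
  move=> x y e; apply/eqP; rewrite -(eqn_pmul2r K0); apply/eqP; rewrite /f in e; lia.
have gidu : forall j, j %% K + K * (j %/ (K * k)) = u ->
    j %% K = u %% K /\ j %/ (K * k) = u %/ K.
  move=> j <-; split; first by rewrite addnC [K * (_ %/ _)]mulnC modnMDl modn_mod.
  by rewrite addnC [K * (_ %/ _)]mulnC divnMDl // (divn_small (ltn_pmod j K0)) addn0.
have jf : forall j, j %% K + K * (j %/ (K * k)) = u -> j = f ((j %/ K) %% k).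
  move=> j /gidu [h1 h2]; rewrite /f -h1 -h2; exact: decomp.
have fgid : forall d, d < k -> f d %% K + K * (f d %/ (K * k)) = u.
  move=> d dk.
  have m1 : f d %% K = u %% K.
    rewrite /f (_ : u %% K + d * K + u %/ K * (K * k) = (d + u %/ K * k) * K + u %% K).
      by rewrite modnMDl modn_mod.
    by rewrite mulnDl -mulnA [k * K]mulnC; lia.
  have m2 : f d %/ (K * k) = u %/ K.
    have h : u %% K + d * K < K * k.
      have : d.+1 * K <= k * K by rewrite leq_mul2r dk orbT.
      nia.
    by rewrite /f addnC divnMDl ?muln_gt0 ?K0 ?k0 // (divn_small h) addn0.
  by rewrite m1 m2 addnC mulnC -divn_eq.
have fdig : forall d, d < k -> (f d %/ K) %% k = d.
  move=> d dk; rewrite /f (_ : u %% K + d * K + u %/ K * (K * k) = (d + u %/ K * k) * K + u %% K).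
    by rewrite divnMDl // (divn_small rK) addn0 addnC modnMDl modn_small.
  by rewrite mulnDl -mulnA [k * K]mulnC; lia.
have fmem : forall j : 'I_(k ^ l), (j \in s) = (j %% K + K * (j %/ (K * k)) == u).
  move=> j; rewrite -(mem_map val_inj) hs; apply/mapP/eqP.
    by case=> d; rewrite mem_iota => /andP[_ dk] ->; exact: fgid.
  move=> g; exists ((j %/ K) %% k); first by rewrite mem_iota ltn_mod k0.
  exact: jf.
have findex : forall j, j \in s -> index j s = (j %/ K) %% k.
  move=> j hj; have := hj; rewrite fmem => /eqP g.
  have dk : (j %/ K) %% k < k by rewrite ltn_mod.
  have ej := jf _ g.
  move: dk; set d := (j %/ K) %% k => dk.
  rewrite -(index_map val_inj) hs (_ : val j = f d); last exact: ej.
  rewrite (index_map finj).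
  have := index_uniq 0 (i := (j %/ K) %% k) (s := iota 0 k) _ (iota_uniq 0 k).
  by rewrite nth_iota // add0n size_iota; apply.
have Dv : forall j, j \in s -> dig k t j = dig k t (u %% K).
  move=> j; rewrite fmem => /eqP /gidu [h1 _].
  by rewrite dig_mod -/K h1 -dig_mod.
exists (dig k t (u %% K)), s; split.
- by rewrite -(size_map val) hs size_map size_iota.
- rewrite hs; apply: (@homo_sorted _ _ f ltn ltn _ _ (iota_ltn_sorted 0 k)) => x y xy.
  rewrite /f /=; nia.
- apply/allP => j hj; rewrite (fmem j) in hj; move/eqP: (hj) => ->.
  rewrite ltnn Dv //; by rewrite fmem hj.
- move=> j; case hj: (j \in s).
    have g : j %% K + K * (j %/ (K * k)) = u by apply/eqP; rewrite -fmem.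
    by rewrite g ltnSn dig_rcons findex // Dv.
  have ne : (j %% K + K * (j %/ (K * k)) == u) = false by rewrite -fmem.
  by rewrite ltnS leq_eqVlt ne.
Qed.

Lemma level_step k l t : 0 < k -> t < l ->
  clos_refl_trans (config k l) (@fire_step k l)
    (fun a => dig k t a) (fun a => dig k t.+1 a).
Proof.
move=> k0 tl.
have K0 : 0 < k ^ t by rewrite expn_gt0 k0.
have eKQ : k ^ l = k ^ t * k * k ^ (l.-1 - t).
  by rewrite -expnSr -expnD; congr (k ^ _); lia.
have eKQ' : k ^ l.-1 = k ^ t * k ^ (l.-1 - t) by rewrite -expnD; congr (k ^ _); lia.
have e0 : Dc k l t 0 = (fun a => dig k t a).
  by apply: functional_extensionality => a.
have e1 : Dc k l t (k ^ l.-1) = (fun a => dig k t.+1 a).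
  apply: functional_extensionality => a; rewrite /Dc /gid.
  have ha := ltn_ord a.
  move: eKQ eKQ' K0 ha; set K := k ^ t; set Q := k ^ (l.-1 - t) => eKQ eKQ' K0 ha.
  have q : a %/ (K * k) < Q by rewrite ltn_divLR ?muln_gt0 ?K0 // mulnC -eKQ.
  have rK := ltn_pmod a K0.
  have : (a %/ (K * k)).+1 * K <= Q * K by rewrite leq_mul2r q orbT.
  by move=> h; rewrite eKQ' ifT //; nia.
rewrite -e0 -e1.
have : forall u, u <= k ^ l.-1 ->
    clos_refl_trans (config k l) (@fire_step k l) (Dc k l t 0) (Dc k l t u).
  elim=> [|u IH] hu; first exact: rt_refl.
  apply: (rt_trans _ _ _ (Dc k l t u)); first exact: IH (ltnW hu).
  by apply: rt_step; apply: Dstep.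
by apply.
Qed.

Lemma reach_dig k l t : 0 < k -> t <= l ->
  clos_refl_trans (config k l) (@fire_step k l) (@init_config k l) (fun a => dig k t a).
Proof.
move=> k0; elim: t => [|t IH] tl.
  have -> : (fun a : 'I_(k ^ l) => dig k 0 a) = @init_config k l.
    by apply: functional_extensionality.
  exact: rt_refl.
apply: (rt_trans _ _ _ (fun a : 'I_(k ^ l) => dig k t a)); first exact: IH (ltnW tl).
exact: level_step.
Qed.

Set Implicit Arguments. Unset Strict Implicit. Unset Printing Implicit Defensive.

Lemma prefix_rconsr (x w : vertex) j :
  prefix x (rcons w j) = prefix x w || (x == rcons w j).
Proof.
elim: w x => [|b w IH] [|a x] //=.
by rewrite IH eqseq_cons andb_orr.
Qed.

Lemma prefix_rcons2 (v w : vertex) i j :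
  prefix (rcons v i) (rcons w j) = prefix (rcons v i) w || ((v == w) && (i == j)).
Proof. by rewrite prefix_rconsr eqseq_rcons. Qed.

Lemma prefix_rcons_self (w : vertex) i : prefix (rcons w i) w = false.
Proof. by apply/negbTE/negP => /size_prefix; rewrite size_rcons ltnn. Qed.

Definition cntA k l (c : config k l) (w : vertex) (P : pred 'I_(k ^ l)) :=
  count (fun a => prefix w (c a) && P a) (enum 'I_(k ^ l)).

Definition INV k l (c : config k l) :=
  [/\ forall a, all (fun d => d < k) (c a),
      forall v i, i < k -> cntA c (rcons v i) xpredT = cntA c (rcons v 0) xpredT &
      forall v i j x, i < j -> j < k ->
        cntA c (rcons v j) (fun a => val a <= x) <= cntA c (rcons v i) (fun a => val a < x)].

Lemma count_enum1 N (b : bool) (e : 'I_N) (P : pred 'I_N) :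
  count (fun a => b && (a == e) && P a) (enum 'I_N) = b && P e.
Proof.
case: b => /=; last by rewrite (eq_count (a2 := pred0)) ?count_pred0.
case Pe: (P e).
  rewrite (eq_count (a2 := pred1 e)) ?count_uniq_mem ?enum_uniq ?mem_enum //.
  by move=> a /=; case: eqP => // ->.
rewrite (eq_count (a2 := pred0)) ?count_pred0 // => a /=.
by case: eqP => // ->.
Qed.

Lemma count_or_disj T (X Y : pred T) s : (forall a, ~~ (X a && Y a)) ->
  count (fun a => X a || Y a) s = count X s + count Y s.
Proof.
move=> h; rewrite -count_predUI (eq_count (a1 := predI X Y) (a2 := pred0)) ?count_pred0 ?addn0 //.
by move=> a /=; apply/negbTE.
Qed.

Lemma cnt_fire k l (c c' : config k l) w s a0 :
  size s = k -> sorted ltn (map val s) -> all (fun i => c i == w) s ->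
  (forall j, c' j = if j \in s then rcons w (index j s) else c j) ->
  forall v i P, cntA c' (rcons v i) P =
     cntA c (rcons v i) P + ((v == w) && (i < k) && P (nth a0 s i)).
Proof.
move=> ss so al hc' v i P.
have us : uniq s.
  by rewrite -(map_inj_uniq val_inj); apply: (sorted_uniq ltn_trans ltnn).
rewrite /cntA -count_enum1 -count_or_disj.
  apply: eq_count => a /=; rewrite hc'; case: ifP => ha.
    have /eqP ca := allP al a ha.
    have key : (i == index a s) = (i < k) && (a == nth a0 s i).
      apply/eqP/andP.
        move=> ->; split; last by apply/eqP/esym/nth_index.
        by move: (index_mem a s); rewrite ss ha.
      by case=> ik /eqP ->; rewrite index_uniq // ss.
    rewrite prefix_rcons2 ca andb_orl key.
    by case: (v == w); rewrite /= ?andbA.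
  case: (v == w) => /=; last by rewrite orbF.
  case ik: (i < k) => /=; last by rewrite orbF.
  have -> : (a == nth a0 s i) = false.
    by apply/negbTE/eqP => e; move: ha; rewrite e mem_nth // ss.
  by rewrite /= orbF.
move=> a; case vw: (v == w); case ik: (i < k); rewrite /= ?andbF //.
case: eqP => [->|_]; rewrite ?andbF //.
move/eqP: vw => ->; rewrite (eqP (allP al _ (mem_nth a0 _))) ?ss // prefix_rcons_self //.
Qed.


Lemma INV_init k l : INV (@init_config k l).
Proof.
have h : forall v i P, cntA (@init_config k l) (rcons v i) P = 0.
  move=> v i P; rewrite /cntA (eq_count (a2 := pred0)) ?count_pred0 //.
  by move=> a; rewrite /init_config /=; case: v.
split => //.
- by move=> v i _; rewrite !h.
- by move=> v i j x _ _; rewrite !h.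
Qed.

Lemma INV_step k l (c c' : config k l) : 0 < k -> fire_step c c' -> INV c -> INV c'.
Proof.
move=> k0 [w [s [ss so al hc']]] [I1 I2 I3].
have k0l : 0 < k ^ l by rewrite expn_gt0 k0.
pose a0 : 'I_(k ^ l) := Ordinal k0l.
have hf := cnt_fire a0 ss so al hc'.
split.
- move=> a; rewrite hc'; case: ifP => ha; last exact: I1.
  rewrite all_rcons; have /eqP <- := allP al a ha; rewrite I1 andbT.
  by move: (index_mem a s); rewrite ss ha.
- by move=> v i ik; rewrite !hf I2 // ik k0.
- move=> v i j x ij jk; rewrite !hf (ltn_trans ij jk) jk /=.
  apply: leq_add; first exact: I3.
  case: (v == w) => //=.
  have hij : val (nth a0 s i) < val (nth a0 s j).
    have := sorted_ltn_nth ltn_trans (val a0) so.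
    rewrite size_map ss -!(nth_map a0 (val a0)) ?ss ?(ltn_trans ij jk) //; apply => //.
    by rewrite inE (ltn_trans ij jk).
  by case: (leqP (val (nth a0 s j)) x) => //= h; rewrite (leq_trans hij h).
Qed.

Lemma INV_reach k l (c : config k l) : 0 < k -> reachable c -> INV c.
Proof.
move=> k0 hr.
have gen : forall x y, clos_refl_trans (config k l) (@fire_step k l) x y -> INV x -> INV y.
  move=> x y; elim => // [a b hab|a b d _ h1 _ h2]; first exact: INV_step.
  by move=> /h1 /h2.
exact: (gen _ _ hr (INV_init k l)).
Qed.

Lemma card_count n (P : pred 'I_n) : #|[pred a | P a]| = count P (enum 'I_n).
Proof.
by rewrite cardE size_filter /enum_mem count_filter; apply: eq_count => a; rewrite !inE andbT.
Qed.

Definition Nv k l (c : config k l) v := cntA c v xpredT.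
Definition Hv k l (c : config k l) (v : vertex) :=
  count (fun a => c a == v) (enum 'I_(k ^ l)).

Lemma sum_eq1 k d : d < k -> \sum_(i < k) ((i : nat) == d : nat) = 1.
Proof.
move=> dk; rewrite (bigD1 (Ordinal dk)) //= eqxx big1 // => i ne.
case: eqP => // e; move: ne; by rewrite -val_eqE /= e eqxx.
Qed.

Lemma pw k (v x : vertex) : all (fun d => d < k) x ->
  (prefix v x : nat) = (x == v) + \sum_(i < k) (prefix (rcons v i) x : nat).
Proof.
move=> ax; have [pv|pv] := boolP (prefix v x).
  move: ax; case/prefixP: pv => y -> ax.
  under eq_bigr => i _ do rewrite -cats1 prefix_catr //= eqxx /=.
  case: y ax => [|d y] ax.
    by rewrite cats0 eqxx big1 // => i _; case: i => i ? /=.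
  have -> : (v ++ d :: y == v) = false.
    by apply/negbTE/eqP => /(congr1 size); rewrite size_cat /=; lia.
  transitivity 1 => //; rewrite add0n -(sum_eq1 (k := k) (d := d)); last by move: ax; rewrite all_cat /= => /and3P[].
  by apply: eq_bigr => i _ /=; case: (_ == _) => //=; case: y {ax}.
have -> : \sum_(i < k) (prefix (rcons v i) x : nat) = 0.
  apply: big1 => i _.
  by case p: (prefix _ _) => //; move: pv; rewrite (prefix_trans (prefix_rcons v i) p).
by case: eqP => // e; move: pv; rewrite e prefix_refl.
Qed.

Lemma split_N k l (c : config k l) v : INV c ->
  Nv c v = Hv c v + k * Nv c (rcons v 0).
Proof.
case=> I1 I2 _; rewrite /Nv /Hv /cntA.
transitivity (\sum_(a <- enum 'I_(k ^ l))
   ((c a == v) + \sum_(i < k) (prefix (rcons v i) (c a) : nat))).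
  by rewrite count_sum; apply: eq_bigr => a _; rewrite andbT; apply: pw.
rewrite big_split /= -count_sum exchange_big /=; congr (_ + _).
transitivity (\sum_(i < k) count (fun a => prefix (rcons v 0) (c a) && xpredT a)
   (enum 'I_(k ^ l))).
  apply: eq_bigr => i _; transitivity (cntA c (rcons v i) xpredT).
    by rewrite /cntA count_sum; apply: eq_bigr => a _; rewrite andbT.
  by rewrite I2.
by rewrite sum_nat_const card_ord.
Qed.

Lemma arith1 k h N K : 0 < k -> h < k -> h + k * N = k * K -> h = 0 /\ N = K.
Proof.
move=> k0 hk e.
have h0 : h = 0.
  by move: (congr1 (modn^~ k) e); rewrite /= addnC mulnC modnMDl [k * K]mulnC modnMl modn_small.
split => //; move: e; rewrite h0 add0n => /eqP; rewrite eqn_mul2l.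
by case: eqP => [k00|_ /eqP] //; move: k0; rewrite k00.
Qed.

Lemma Hv_lt k l (c : config k l) v : stable c -> Hv c v < k.
Proof. by move=> st; have := st v; rewrite card_count. Qed.

Lemma prefix_nil (x : vertex) : prefix [::] x = true.
Proof. by case: x. Qed.

Lemma Nv_nil k l (c : config k l) : Nv c [::] = k ^ l.
Proof.
rewrite /Nv /cntA (eq_count (a2 := predT)) ?count_predT ?size_enum_ord //.
by move=> a; rewrite prefix_nil.
Qed.

Lemma levels k l (c : config k l) : 0 < k -> INV c -> stable c ->
  forall v, all (fun d => d < k) v -> size v <= l ->
    Nv c v = k ^ (l - size v) /\ (size v < l -> Hv c v = 0).
Proof.
move=> k0 inv st; elim/last_ind => [|u i IH].
  move=> _ _; rewrite subn0 Nv_nil.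
  split => // l0.
  have e := split_N [::] inv.
  rewrite Nv_nil in e.
  have ex : k ^ l = k * k ^ l.-1 by rewrite -expnS prednK.
  by have [] := arith1 k0 (Hv_lt [::] st) (etrans (esym e) ex).
rewrite all_rcons size_rcons => /andP[ik au] sl.
have [IH1 _] := IH au (ltnW sl).
have e := split_N u inv.
have ex : l - size u = (l - (size u).+1).+1 by lia.
rewrite IH1 ex expnS in e.
have [h0 n0] := arith1 k0 (Hv_lt u st) (esym e).
have e3 : Nv c (rcons u i) = k ^ (l - (size u).+1).
  by case: inv => I1 I2 I3; rewrite /Nv I2 // -/(Nv c (rcons u 0)) n0.
split => // sl2.
have e2 := split_N (rcons u i) inv.
rewrite e3 in e2.
have ex2 : k ^ (l - (size u).+1) = k * k ^ (l - (size u).+1).-1.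
  by rewrite -expnS prednK // subn_gt0.
by have [] := arith1 k0 (Hv_lt _ st) (etrans (esym e2) ex2).
Qed.

Lemma count_pos n (P : pred 'I_n) a : P a -> 0 < count P (enum 'I_n).
Proof. by move=> Pa; rewrite -has_count; apply/hasP; exists a; rewrite ?mem_enum. Qed.

Lemma all_take_lt k (x : vertex) m : all (fun d => d < k) x -> all (fun d => d < k) (take m x).
Proof. by move=> /allP h; apply/allP => d /mem_take /h. Qed.

Lemma FS k l (c : config k l) : 1 < k -> INV c -> stable c ->
  [/\ forall a, size (c a) = l,
      forall a b, c a = c b -> a = b &
      forall u, all (fun d => d < k) u -> size u = l -> exists a, c a = u].
Proof.
move=> k1 inv st.
have k0 : 0 < k by lia.
have inv' := inv; case: inv' => I1 I2 I3.
have Nleaf : forall u, all (fun d => d < k) u -> size u = l -> Nv c u = 1.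
  by move=> u au su; have [-> _] := levels k0 inv st au (eq_leq su); rewrite su subnn.
have sz : forall a, size (c a) = l.
  move=> a; case: (ltngtP (size (c a)) l) => // h.
    have [_ /(_ h) H0] := levels k0 inv st (I1 a) (ltnW h).
    by have := @count_pos (k ^ l) (fun b => c b == c a) a (eqxx (c a)); rewrite -/(Hv c (c a)) H0.
  pose w := take l (c a).
  have aw : all (fun d => d < k) w by apply: all_take_lt.
  have sw : size w = l by rewrite size_take h.
  have e := split_N w inv; rewrite Nleaf // in e.
  have N0 : Nv c (rcons w 0) = 0 by lia.
  pose d := nth 0 (c a) l.
  have dk : d < k by apply: (allP (I1 a)); rewrite mem_nth.
  have : Nv c (rcons w d) = 0 by rewrite /Nv I2 // -/(Nv c (rcons w 0)) N0.
  have pa : prefix (rcons w d) (c a) && xpredT a.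
    by rewrite /= andbT /w /d -take_nth // prefix_take.
  move=> H; have := @count_pos (k ^ l) (fun b => prefix (rcons w d) (c b) && xpredT b) a pa.
  by rewrite -/(cntA c (rcons w d) xpredT) -/(Nv c (rcons w d)) H.
split => //.
- move=> a b eab.
  have e := split_N (c a) inv; rewrite Nleaf // in e.
  have : #|[pred y | c y == c a]| <= 1 by rewrite card_count -/(Hv c (c a)); lia.
  move/card_le1_eqP => h; apply: h; rewrite !inE ?eab //.
- move=> u au su.
  have : 0 < Nv c u by rewrite Nleaf.
  rewrite /Nv /cntA -has_count => /hasP[a _] /andP[pa _].
  exists a; move: pa; rewrite prefixE su -(sz a) take_size; by move/eqP.
Qed.

Definition Sv k l (c : config k l) (v : vertex) n :=
  mkseq (fun p => label_at c (v ++ layer_vertex k n p)) (k ^ n).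

Lemma label_inj k l (c : config k l) a :
  (forall a b, c a = c b -> a = b) -> label_at c (c a) = (val a).+1.
Proof.
move=> inj; rewrite /label_at; case: pickP => [i /eqP /inj -> //|].
by move/(_ a); rewrite eqxx.
Qed.

Lemma lv_size k n p : size (layer_vertex k n p) = n.
Proof. by rewrite /layer_vertex size_map size_iota. Qed.

Lemma lv_all k n p : 0 < k -> all (fun d => d < k) (layer_vertex k n p).
Proof. by move=> k0; apply/allP => d /mapP[j _ ->]; rewrite ltn_mod. Qed.

Lemma lv_surj k (u : vertex) : 0 < k -> all (fun d => d < k) u ->
  exists p, p < k ^ size u /\ layer_vertex k (size u) p = u.
Proof.
move=> k0; elim: u => [|d u IH] /=; first by exists 0; split.
case/andP=> dk /IH [p [hp e]].
exists (d * k ^ size u + p); rewrite lv_cons // e; split => //.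
rewrite expnS; have : d.+1 * k ^ size u <= k * k ^ size u by rewrite leq_mul2r dk orbT.
by rewrite mulSn; lia.
Qed.


Lemma Sv_perm k l (c : config k l) v n : 0 < k ->
  (forall a, size (c a) = l) -> (forall a b, c a = c b -> a = b) ->
  (forall u, all (fun d => d < k) u -> size u = l -> exists a, c a = u) ->
  (forall a, all (fun d => d < k) (c a)) ->
  all (fun d => d < k) v -> size v + n = l ->
  perm_eq (Sv c v n)
    (map (fun a => (val a).+1) (filter (fun a => prefix v (c a)) (enum 'I_(k ^ l)))).
Proof.
move=> k0 sz inj surj I1 av svn.
have ex : forall p, exists a, c a = v ++ layer_vertex k n p.
  by move=> p; apply: surj; rewrite ?all_cat ?av ?lv_all ?size_cat ?lv_size.
apply: uniq_perm.
- rewrite /Sv /mkseq map_inj_in_uniq ?iota_uniq // => p q.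
  rewrite !mem_iota /= => hp hq.
  have [a ea] := ex p; have [b eb] := ex q.
  rewrite -ea -eb !label_inj // => [[/val_inj eab]].
  move: eb; rewrite -eab ea => /eqP; rewrite eqseq_cat // eqxx /= => /eqP.
  by apply: lv_inj.
- rewrite map_inj_uniq; first exact: (filter_uniq _ (enum_uniq _)).
  by move=> a b [/val_inj].
- move=> x; apply/idP/idP.
    case/mapP => p _ ->; have [a ea] := ex p; rewrite -ea label_inj //.
    by apply: map_f; rewrite mem_filter mem_enum ea prefix_prefix.
  case/mapP => a; rewrite mem_filter mem_enum andbT => /prefixP[y ey] ->.
  have ay : all (fun d => d < k) y by move: (I1 a); rewrite ey all_cat => /andP[].
  have sy : size y = n.
    by move: (sz a); rewrite ey size_cat -svn => /eqP; rewrite eqn_add2l => /eqP.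
  have [p [hp ep]] := lv_surj k0 ay.
  apply/mapP; exists p; first by rewrite mem_iota -sy.
  by rewrite -sy ep -ey label_inj.
Qed.

Lemma rhs_uniq k l (c : config k l) v :
  uniq (map (fun a => (val a).+1) (filter (fun a => prefix v (c a)) (enum 'I_(k ^ l)))).
Proof.
rewrite map_inj_uniq; first exact: (filter_uniq _ (enum_uniq _)).
by move=> a b [/val_inj].
Qed.

Lemma Sv_flatten k l (c : config k l) v n : 0 < k ->
  Sv c v n.+1 = flatten [seq Sv c (rcons v i) n | i <- iota 0 k].
Proof.
move=> k0; rewrite /Sv expnS mkseq_blocks; congr flatten.
apply/eq_in_map => i; rewrite mem_iota => /andP[_ ik].
rewrite /mkseq; apply/eq_in_map => r; rewrite mem_iota => /andP[_ rk] /=.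
by rewrite lv_cons // cat_rcons.
Qed.

Lemma Sv_bound k l (c : config k l) : 1 < k -> INV c -> stable c ->
  forall n v, all (fun d => d < k) v -> size v + n = l -> invs (Sv c v n) <= fZ k n.
Proof.
move=> k1 inv st.
have k0 : 0 < k by lia.
have [sz inj surj] := FS k1 inv st.
have inv' := inv; case: inv' => I1 I2 I3.
have cnt : forall v n Q, all (fun d => d < k) v -> size v + n = l ->
    count Q (Sv c v n) = cntA c v (fun a => Q (val a).+1).
  move=> v n Q av svn.
  rewrite (permP (Sv_perm k0 sz inj surj I1 av svn)) count_map count_filter /cntA.
  by apply: eq_count => a; rewrite /= andbC.
elim=> [|n IH] v av svn; first by rewrite /Sv expn0.
rewrite Sv_flatten //.
apply: leq_trans (blocks_le (fun i => Sv c (rcons v i) n) (fZ k n) ('C(k ^ n, 2)) k 0 _ _) _ => //.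
- move=> i /andP[_ ik]; apply: IH; first by rewrite all_rcons ik av.
  by rewrite size_rcons addSnnS.
- move=> i j _ ij jk.
  have avi : all (fun d => d < k) (rcons v i) by rewrite all_rcons (ltn_trans ij jk) av.
  have avj : all (fun d => d < k) (rcons v j) by rewrite all_rcons jk av.
  have sv : forall d, size (rcons v d) + n = l by move=> d; rewrite size_rcons addSnnS.
  apply: cross_bound; rewrite ?size_mkseq //.
    by rewrite (perm_uniq (Sv_perm k0 sz inj surj I1 avj (sv j))) rhs_uniq.
  move=> x; rewrite (cnt _ _ _ avj (sv j)) (cnt _ _ _ avi (sv i)).
  case: x => [|x].
    by rewrite /cntA (eq_count (a2 := pred0)) ?count_pred0 // => a; rewrite andbF.
  exact: I3.
Qed.

Unset Implicit Arguments. Set Strict Implicit.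

Theorem theorem6p1 (k l : nat) (hk : 2 <= k) :
  (exists c : config k l, [/\ reachable c, stable c & perm_of c = Z k l]) /\
  (forall c : config k l, reachable c -> stable c ->
     inversions (perm_of c) <= inversions (Z k l)) /\
  ((inversions (Z k l))%:R : rat)%R =
    ((k%:R ^+ (2 * l) - l%:R * k%:R ^+ l.+1 + (l%:R - 1) * k%:R ^+ l) / 4
      : rat)%R.
Proof.
have k0 : 0 < k by lia.
have Zeq : Z k l = map S (R k l) by rewrite /Z /R /mkseq -map_comp.
have invZ : inversions (Z k l) = fZ k l.
  by rewrite inversions_invs Zeq invs_map // invs_R.
split; [|split].
- pose cZ : config k l := fun a => dig k l a.
  have inj : forall a b : 'I_(k ^ l), cZ a = cZ b -> a = b.
    by move=> a b e; apply: val_inj; apply: (dig_inj k l a b k0 (ltn_ord a) (ltn_ord b) e).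
  exists cZ; split.
  + exact: reach_dig k0 (leqnn l).
  + move=> v; apply: (@leq_ltn_trans 1); last by [].
    apply/card_le1_eqP => x y; rewrite !inE => /eqP hx /eqP hy.
    by apply: inj; rewrite hx hy.
  + rewrite /perm_of /Z /mkseq; apply/eq_in_map => p; rewrite mem_iota => /andP[_ hp] /=.
    have [r1 r2] := rev_lv k l p k0 hp.
    rewrite -r2; have := @label_inj k l cZ (Ordinal r1) inj; by rewrite /=.
- move=> c hr st; rewrite invZ inversions_invs.
  have inv := INV_reach k0 hr.
  exact: (Sv_bound hk inv st (n := l) (v := [::]) isT (add0n l)).
- rewrite [inversions _]invZ; apply: (@mulIf _ 4) => //.
  rewrite fZ_rat divfK // mulnC exprM exprSr.
  by rewrite [(k%:R ^+ l.+1)%R]exprSr.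
Qed.
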